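(* Let $u\geq 1$, $a=(-u,-1)$, $b=(u,1)$, $h(x)=-u/x$, and fix $x\in(-u,0)$. Then for all $p\neq 0$ close enough to zero, whenever $y_p>1$ and $(x,y_p)\in B_p(a,b)$, both $y_p$ and $h(x)$ lie in the open interval $(1,\,2h(x)+3)$.
   Context: For $p\neq 0$ and $(x,y)\in\mathbb{R}^2$ let $L_p((x,y))=(|x|^p+|y|^p)^{1/p}$; for $p<0$ this is extended by setting $L_p((x,y))=0$ whenever $x=0$ or $y=0$. The bisector is $B_p(a,b)=\{q\in\mathbb{R}^2: L_p(a-q)=L_p(b-q)\}$. *)

(* Defs.v *)
From Stdlib Require Import Reals.
Open Scope R_scope.

(* Real power a^e for a >= 0, with the convention 0^e = 0 (used for e <> 0). *)
Definition rpow (a e : R) : R :=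
  if Req_EM_T a 0 then 0 else Rpower a e.

(* L_p((x,y)) = (|x|^p + |y|^p)^(1/p) for p <> 0;
   for p < 0 it is set to 0 whenever x = 0 or y = 0. *)
Definition Lp (p : R) (q : R * R) : R :=
  let (x, y) := q in
  if Rlt_dec p 0 then
    (if Req_EM_T x 0 then 0 else if Req_EM_T y 0 then 0
     else rpow (rpow (Rabs x) p + rpow (Rabs y) p) (1 / p))
  else rpow (rpow (Rabs x) p + rpow (Rabs y) p) (1 / p).

Definition vsub (a q : R * R) : R * R := (fst a - fst q, snd a - snd q).

Definition in_bisector (p : R) (a b q : R * R) : Prop :=
  Lp p (vsub a q) = Lp p (vsub b q).

(* Main.v *)
Require Import Defs.
From Stdlib Require Import Reals.
From Stdlib Require Import Lra Psatz.
Open Scope R_scope.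

Lemma my_exp_le x y : x <= y -> exp x <= exp y.
Proof. intros H; destruct (Rle_lt_or_eq_dec _ _ H) as [H1|H1].
  left; now apply exp_increasing. subst; lra. Qed.

Lemma my_ln_le x y : 0 < x -> x <= y -> ln x <= ln y.
Proof. intros Hx H; destruct (Rle_lt_or_eq_dec _ _ H) as [H1|H1].
  left; now apply ln_increasing. subst; lra. Qed.

Lemma cvx a b : exp a - exp b <= exp a * (a - b).
Proof.
  assert (E : exp b = exp a * exp (b - a)) by (rewrite <- exp_plus; f_equal; ring).
  pose proof (exp_ineq1_le (b - a)). pose proof (exp_pos a).
  rewrite E. nra.
Qed.

Lemma ln_step D : 0 < D -> ln (D + 2) - ln D < 2 / D.
Proof.
  intros HD.
  assert (H1 : 1 + 2 / D < exp (2 / D)).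
  { apply exp_ineq1. apply Rgt_not_eq. apply Rdiv_lt_0_compat; lra. }
  assert (H2 : (D + 2) / D = 1 + 2 / D) by (field; lra).
  assert (H3 : ln ((D+2)/D) < 2 / D).
  { rewrite <- (ln_exp (2/D)). apply ln_increasing.
    apply Rdiv_lt_0_compat; lra. lra. }
  unfold Rdiv in H3. rewrite ln_mult, ln_Rinv in H3; try lra.
  apply Rinv_0_lt_compat; lra.
Qed.

Lemma key (A B D D0 p : R) (hA: 0<A) (hAB: A<B) (hD0: 0<D0) (hD: D0<=D)
  (hp1: p<=1) (hp0: p<>0)
  (hc1: exp(p*ln(D0+2)) <= 2*exp(p*ln A)) (hc2: exp(p*ln D0) <= 2*exp(p*ln B))
  (heq: exp(p*ln A)+exp(p*ln(D+2)) = exp(p*ln B)+exp(p*ln D)) :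
  ln B - ln A < 4/D0.
Proof.
  assert (hD' : 0 < D) by lra.
  pose proof (ln_step D hD') as hst.
  set (M := ln B - ln A) in *.
  assert (hM : 0 < M) by (unfold M; pose proof (ln_increasing A B hA hAB); lra).
  set (eA := exp (p * ln A)) in *. set (eB := exp (p * ln B)) in *.
  set (eC := exp (p * ln (D+2))) in *. set (eD := exp (p * ln D)) in *.
  assert (peA : 0 < eA) by apply exp_pos. assert (peB : 0 < eB) by apply exp_pos.
  assert (peC : 0 < eC) by apply exp_pos. assert (peD : 0 < eD) by apply exp_pos.
  assert (hinvD : 2 / D <= 2 / D0).
  { unfold Rdiv. apply Rmult_le_compat_l; try lra. apply Rinv_le_contravar; lra. }
  assert (hlnD : ln D0 <= ln D) by (apply my_ln_le; lra).
  assert (hlnC : ln (D0+2) <= ln (D+2)) by (apply my_ln_le; lra).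
  destruct (Rlt_or_le 0 p) as [hp|hp].
  -
    pose proof (cvx (p * ln (D+2)) (p * ln D)) as c1. fold eC eD in c1.
    pose proof (cvx (p * ln A) (p * ln B)) as c2. fold eA eB in c2.
    assert (h1 : eA * M < eC * (2 / D)).
    { assert (p * (eA * M) < p * (eC * (2/D))).
      { assert (eC * (p * ln (D + 2) - p * ln D) < eC * (p * (2/D))).
        { apply Rmult_lt_compat_l; try lra.
          replace (p * ln (D + 2) - p * ln D) with (p * (ln (D+2) - ln D)) by ring.
          apply Rmult_lt_compat_l; lra. }
        unfold M. nra. }
      nra. }
    assert (h2 : eC <= exp (p * ln (D0+2)) * ((D+2)/(D0+2))).
    { unfold eC.
      replace (p * ln (D+2)) with (p * ln (D0+2) + p * (ln (D+2) - ln (D0+2))) by ring.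
      rewrite exp_plus. apply Rmult_le_compat_l. left; apply exp_pos.
      rewrite <- (exp_ln ((D+2)/(D0+2))) by (apply Rdiv_lt_0_compat; lra).
      apply my_exp_le. unfold Rdiv. rewrite ln_mult, ln_Rinv; try lra.
      nra. apply Rinv_0_lt_compat; lra. }
    assert (h3 : (D+2)/(D0+2) * (2 / D) <= 2 / D0).
    { assert (E : 2 / D0 - (D+2)/(D0+2) * (2 / D) = 4 * (D - D0) / (D0 * D * (D0+2)))
        by (field; lra).
      assert (0 <= 4 * (D - D0) / (D0 * D * (D0+2))).
      { apply Rmult_le_pos. lra. apply Rlt_le, Rinv_0_lt_compat.
        apply Rmult_lt_0_compat; [apply Rmult_lt_0_compat|]; lra. }
      lra. }
    assert (h4 : eA * M < 2 * eA * (2 / D0)).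
    { apply Rlt_le_trans with (1 := h1).
      apply Rle_trans with (exp (p * ln (D0+2)) * ((D+2)/(D0+2)) * (2/D)).
      apply Rmult_le_compat_r. apply Rlt_le, Rdiv_lt_0_compat; lra. exact h2.
      rewrite Rmult_assoc. apply Rle_trans with (2 * eA * ((D+2)/(D0+2) * (2/D))).
      apply Rmult_le_compat_r. apply Rlt_le, Rmult_lt_0_compat; apply Rdiv_lt_0_compat; lra. lra.
      apply Rmult_le_compat_l; lra. }
    assert (M < 2 * (2 / D0)) by nra.
    replace (4 / D0) with (2 * (2 / D0)) by (field; lra). lra.
  -
    assert (hp' : p < 0) by lra.
    pose proof (cvx (p * ln D) (p * ln (D+2))) as c1. fold eC eD in c1.
    pose proof (cvx (p * ln B) (p * ln A)) as c2. fold eA eB in c2.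
    assert (h1 : eB * M < eD * (2 / D)).
    { assert ((-p) * (eB * M) < (-p) * (eD * (2/D))).
      { assert (eD * (p * ln D - p * ln (D+2)) < eD * ((-p) * (2/D))).
        { apply Rmult_lt_compat_l; try lra.
          replace (p * ln D - p * ln (D+2)) with ((-p) * (ln (D+2) - ln D)) by ring.
          apply Rmult_lt_compat_l; lra. }
        unfold M. nra. }
      nra. }
    assert (h2 : eD <= exp (p * ln D0)).
    { unfold eD. apply my_exp_le. nra. }
    assert (h4 : eB * M < 2 * eB * (2 / D0)).
    { apply Rlt_le_trans with (1 := h1).
      apply Rle_trans with (2 * eB * (2 / D)).
      apply Rmult_le_compat_r. apply Rlt_le, Rdiv_lt_0_compat; lra. lra.
      apply Rmult_le_compat_l; lra. }
    assert (M < 2 * (2 / D0)) by nra.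
    replace (4 / D0) with (2 * (2 / D0)) by (field; lra). lra.
Qed.

Lemma Lp_eq p a b : p <> 0 -> a <> 0 -> b <> 0 ->
  Lp p (a, b) = exp ((1/p) * ln (exp (p * ln (Rabs a)) + exp (p * ln (Rabs b)))).
Proof.
  intros hp ha hb.
  assert (Ha : Rabs a <> 0) by (apply Rabs_no_R0; auto).
  assert (Hb : Rabs b <> 0) by (apply Rabs_no_R0; auto).
  assert (E : rpow (rpow (Rabs a) p + rpow (Rabs b) p) (1 / p) =
     exp ((1/p) * ln (exp (p * ln (Rabs a)) + exp (p * ln (Rabs b))))).
  { unfold rpow.
    destruct (Req_EM_T (Rabs a) 0); [contradiction|].
    destruct (Req_EM_T (Rabs b) 0); [contradiction|].
    unfold Rpower.
    destruct (Req_EM_T (exp (p * ln (Rabs a)) + exp (p * ln (Rabs b))) 0) as [e|e].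
    - pose proof (exp_pos (p * ln (Rabs a))); pose proof (exp_pos (p * ln (Rabs b))); lra.
    - reflexivity. }
  unfold Lp. destruct (Rlt_dec p 0).
  - destruct (Req_EM_T a 0); [contradiction|].
    destruct (Req_EM_T b 0); [contradiction|]. exact E.
  - exact E.
Qed.

Lemma bis_eq p A B C D : p <> 0 -> 0 < A -> 0 < B -> 0 < C -> 0 < D ->
  exp ((1/p) * ln (exp (p * ln A) + exp (p * ln C))) =
  exp ((1/p) * ln (exp (p * ln B) + exp (p * ln D))) ->
  exp (p * ln A) + exp (p * ln C) = exp (p * ln B) + exp (p * ln D).
Proof.
  intros hp hA hB hC hD H.
  apply exp_inv in H.
  apply ln_inv.
  - pose proof (exp_pos (p * ln A)); pose proof (exp_pos (p * ln C)); lra.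
  - pose proof (exp_pos (p * ln B)); pose proof (exp_pos (p * ln D)); lra.
  - apply (f_equal (fun t => p * t)) in H.
    replace (p * (1 / p * ln (exp (p * ln A) + exp (p * ln C)))) with
      (ln (exp (p * ln A) + exp (p * ln C))) in H by (field; auto).
    replace (p * (1 / p * ln (exp (p * ln B) + exp (p * ln D)))) with
      (ln (exp (p * ln B) + exp (p * ln D))) in H by (field; auto).
    exact H.
Qed.

Lemma small_bound p c : Rabs p * Rabs c < ln 2 -> exp (p * c) <= 2.
Proof.
  intros H. rewrite <- (exp_ln 2) by lra. apply my_exp_le.
  rewrite <- Rabs_mult in H. pose proof (Rle_abs (p * c)). lra.
Qed.

Lemma ratio_bound p X Y : 0 < X -> 0 < Y -> Rabs p * Rabs (ln X - ln Y) < ln 2 ->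
  exp (p * ln X) <= 2 * exp (p * ln Y).
Proof.
  intros hX hY H. pose proof (small_bound _ _ H) as H2.
  replace (p * ln X) with (p * ln Y + p * (ln X - ln Y)) by ring.
  rewrite exp_plus. pose proof (exp_pos (p * ln Y)). nra.
Qed.

Theorem lemma6 (u x : R) (hu : 1 <= u) (hx1 : -u < x) (hx2 : x < 0) :
  exists delta : R, 0 < delta /\
    forall p : R, p <> 0 -> Rabs p < delta ->
    forall y : R, 1 < y -> in_bisector p (-u, -1) (u, 1) (x, y) ->
      (1 < y /\ y < 2 * (- u / x) + 3) /\
      (1 < - u / x /\ - u / x < 2 * (- u / x) + 3).
Proof.
  set (h := - u / x).
  assert (hh : 1 < h).
  { assert (E : h - 1 = (u + x) / (- x)) by (unfold h; field; lra).
    assert (0 < (u + x) / (- x)) by (apply Rdiv_lt_0_compat; lra). lra. }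
  set (D0 := 2 * h + 2).
  set (A := u + x). set (B := u - x).
  assert (hA : 0 < A) by (unfold A; lra).
  assert (hB : 0 < B) by (unfold B; lra).
  assert (hD0 : 0 < D0) by (unfold D0; lra).
  set (K := Rabs (ln (D0 + 2) - ln A) + Rabs (ln D0 - ln B) + 1).
  assert (hK : 0 < K) by (unfold K; pose proof (Rabs_pos (ln (D0 + 2) - ln A));
     pose proof (Rabs_pos (ln D0 - ln B)); lra).
  assert (hl2 : 0 < ln 2) by (pose proof ln_lt_2; lra).
  exists (Rmin 1 (ln 2 / K)). split.
  { apply Rmin_glb_lt; [lra|]. apply Rdiv_lt_0_compat; lra. }
  intros p hp0 hpd y hy hbis.
  assert (hp1 : Rabs p < 1) by (pose proof (Rmin_l 1 (ln 2 / K)); lra).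
  assert (hpK : Rabs p * K < ln 2).
  { pose proof (Rmin_r 1 (ln 2 / K)).
    assert (Rabs p < ln 2 / K) by lra.
    apply Rmult_lt_compat_r with (r := K) in H0; auto.
    unfold Rdiv in H0. rewrite Rmult_assoc, Rinv_l in H0; lra. }
  assert (hpa : 0 <= Rabs p) by apply Rabs_pos.
  assert (hc1 : exp (p * ln (D0 + 2)) <= 2 * exp (p * ln A)).
  { apply ratio_bound; try lra.
    pose proof (Rabs_pos (ln D0 - ln B)).
    assert (Rabs p * Rabs (ln (D0 + 2) - ln A) <= Rabs p * K).
    { apply Rmult_le_compat_l; auto. unfold K; lra. }
    lra. }
  assert (hc2 : exp (p * ln D0) <= 2 * exp (p * ln B)).
  { apply ratio_bound; try lra.
    pose proof (Rabs_pos (ln (D0 + 2) - ln A)).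
    assert (Rabs p * Rabs (ln D0 - ln B) <= Rabs p * K).
    { apply Rmult_le_compat_l; auto. unfold K; lra. }
    lra. }
  assert (hM : 4 / D0 <= ln B - ln A).
  { pose proof (exp_ineq1_le (ln A - ln B)) as E.
    replace (exp (ln A - ln B)) with (A * / B) in E by
      (unfold Rminus; rewrite exp_plus, exp_Ropp, !exp_ln by lra; reflexivity).
    assert (E2 : 4 / D0 = 1 - A * / B) by (unfold D0, h, A, B; field; lra).
    lra. }
  split; [split; [exact hy|] | split; lra].
  destruct (Rlt_or_le y (2 * h + 3)) as [hlt|hge]; [exact hlt|].
  exfalso.
  unfold in_bisector, vsub in hbis. cbn [fst snd] in hbis.
  rewrite (Lp_eq p (-u - x) (-1 - y)) in hbis by lra.
  rewrite (Lp_eq p (u - x) (1 - y)) in hbis by lra.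
  rewrite (Rabs_left (-u - x)) in hbis by lra.
  rewrite (Rabs_left (-1 - y)) in hbis by lra.
  rewrite (Rabs_right (u - x)) in hbis by lra.
  rewrite (Rabs_left (1 - y)) in hbis by lra.
  replace (- (-u - x)) with A in hbis by (unfold A; ring).
  replace (- (-1 - y)) with ((y - 1) + 2) in hbis by ring.
  replace (- (1 - y)) with (y - 1) in hbis by ring.
  fold B in hbis.
  apply bis_eq in hbis; try lra.
  assert (hp1' : p <= 1) by (pose proof (Rle_abs p); lra).
  pose proof (key A B (y - 1) D0 p hA ltac:(unfold A, B; lra) hD0
     ltac:(unfold D0 in *; lra) hp1' hp0 hc1 hc2 hbis).
  lra.
Qed.
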